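(* Every orbit of the action of $\mathrm{Aut}(\mathbb{G})$ on $\mathbb{G}$ that is three-dimensional, namely every set $\mathscr{L}_a=\{(z_1+z_2,z_1z_2):z_1,z_2\in\mathbb{D},\ |\frac{z_1-z_2}{1-\overline{z_1}z_2}|=a\}$ with $a\in(0,1)$, is a strongly pseudoconvex real hypersurface in $\mathbb{G}$.
   Context: $\mathbb{D}$ is the open unit disc in $\mathbb{C}$ and $\mathbb{G}=\{(z_1+z_2,z_1z_2):z_1,z_2\in\mathbb{D}\}\subset\mathbb{C}^2$ is the symmetrized bidisc. Its holomorphic automorphism group is $\mathrm{Aut}(\mathbb{G})=\{H_\varphi:\varphi\in\mathrm{Aut}(\mathbb{D})\}$, where $H_\varphi(z_1+z_2,z_1z_2)=(\varphi(z_1)+\varphi(z_2),\varphi(z_1)\varphi(z_2))$. The orbits of this action are the sets $\mathscr{L}_a$, $a\in[0,1)$; $\mathscr{L}_0=\{(2z,z^2):z\in\mathbb{D}\}$ is a complex curve and the others are real three-dimensional. *)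

(* Defs.v *)
From Stdlib Require Import Reals.
From Coquelicot Require Import Coquelicot.
Open Scope R_scope.

Definition C2 := (C * C)%type.

Definition in_disc (z : C) : Prop := Cmod z < 1.

Definition symbidisc (w : C2) : Prop :=
  exists z1 z2 : C, in_disc z1 /\ in_disc z2 /\
    w = (Cplus z1 z2, Cmult z1 z2).

Definition L_orbit (a : R) (w : C2) : Prop :=
  exists z1 z2 : C, in_disc z1 /\ in_disc z2 /\
    Cmod (Cdiv (Cminus z1 z2) (Cminus (RtoC 1) (Cmult (Cconj z1) z2))) = a /\
    w = (Cplus z1 z2, Cmult z1 z2).

Definition C2_shift (p v : C2) (t : R) : C2 :=
  (Cplus (fst p) (Cmult (RtoC t) (fst v)), Cplus (snd p) (Cmult (RtoC t) (snd v))).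

Definition C2_J (v : C2) : C2 := (Cmult Ci (fst v), Cmult Ci (snd v)).

Definition C2_zero : C2 := (RtoC 0, RtoC 0).

Definition dir_deriv (f : C2 -> R) (v : C2) (p : C2) : R :=
  Derive (fun t => f (C2_shift p v t)) 0.

Definition dir_derivable (f : C2 -> R) (v : C2) (p : C2) : Prop :=
  ex_derive (fun t => f (C2_shift p v t)) 0.

Definition C2_on (U : C2 -> Prop) (f : C2 -> R) : Prop :=
  forall q, U q ->
    continuous f q /\
    forall v w : C2,
      dir_derivable f v q /\ continuous (dir_deriv f v) q /\
      dir_derivable (dir_deriv f v) w q /\
      continuous (dir_deriv (dir_deriv f v) w) q.

Definition hess (f : C2 -> R) (p v w : C2) : R := dir_deriv (dir_deriv f v) w p.

(** Levi form of f at p evaluated on v (viewed as a vector of C^2):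
    sum_{j,k} d^2 f/dz_j d\bar z_k v_j \bar v_k
      = (1/4) (D^2 f(p)(v,v) + D^2 f(p)(Jv,Jv)). *)
Definition levi_form (f : C2 -> R) (p v : C2) : R :=
  / 4 * (hess f p v v + hess f p (C2_J v) (C2_J v)).

Definition complex_tangent (f : C2 -> R) (p v : C2) : Prop :=
  dir_deriv f v p = 0 /\ dir_deriv f (C2_J v) p = 0.

Definition local_defining_function (Omega M : C2 -> Prop) (p : C2)
    (U : C2 -> Prop) (rho : C2 -> R) : Prop :=
  open U /\ U p /\ (forall q, U q -> Omega q) /\
  C2_on U rho /\
  (forall q, U q -> (M q <-> rho q = 0)) /\
  (forall q, U q -> exists v : C2, dir_deriv rho v q <> 0).

Definition real_hypersurface (Omega M : C2 -> Prop) : Prop :=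
  (forall p, M p -> Omega p) /\
  forall p, M p -> exists U rho, local_defining_function Omega M p U rho.

Definition strongly_pseudoconvex_hypersurface (Omega M : C2 -> Prop) : Prop :=
  (forall p, M p -> Omega p) /\
  forall p, M p -> exists U rho, local_defining_function Omega M p U rho /\
    forall v : C2, v <> C2_zero -> complex_tangent rho p v ->
      levi_form rho p v > 0.

(* Main.v *)
Require Import Defs.
From Stdlib Require Import Reals.
From Coquelicot Require Import Coquelicot.
Open Scope R_scope.
From Stdlib Require Import Lra Psatz FunctionalExtensionality.

Inductive pe : Type :=
| PC (r : R) | PV (i : nat) | PA (e1 e2 : pe) | PM (e1 e2 : pe).

Definition coord (i : nat) (q : C2) : R :=
  match i with 0 => fst (fst q) | 1 => snd (fst q) | 2 => fst (snd q) | _ => snd (snd q) end.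

Fixpoint ev (e : pe) (q : C2) : R := match e with
 | PC r => r | PV i => coord i q | PA a b => ev a q + ev b q | PM a b => ev a q * ev b q end.

Fixpoint dv (v : C2) (e : pe) : pe := match e with
 | PC _ => PC 0 | PV i => PC (coord i v) | PA a b => PA (dv v a) (dv v b)
 | PM a b => PA (PM (dv v a) b) (PM a (dv v b)) end.

Lemma coord_shift i q v t : coord i (C2_shift q v t) = coord i q + t * coord i v.
Proof.
  destruct q as [[a b][c d]]; destruct v as [[a' b'][c' d']].
  destruct i as [|[|[|i]]]; unfold C2_shift, Cplus, Cmult, RtoC; simpl; ring.
Qed.

Lemma shift0 q v : C2_shift q v 0 = q.
Proof.
  destruct q as [[a b][c d]]; destruct v as [[a' b'][c' d']].
  unfold C2_shift, Cplus, Cmult, RtoC; simpl. f_equal; f_equal; ring.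
Qed.

Lemma ev_derive e q v : is_derive (fun t => ev e (C2_shift q v t)) 0 (ev (dv v e) q).
Proof.
  induction e; simpl.
  - apply (is_derive_ext (fun _ => r)); [reflexivity|]. auto_derive; auto.
  - apply (is_derive_ext (fun t => coord i q + t * coord i v)).
    { intros; rewrite coord_shift; reflexivity. }
    auto_derive; auto. ring.
  - apply (is_derive_plus _ _ _ _ _ IHe1 IHe2).
  - pose proof (is_derive_mult _ _ _ _ _ IHe1 IHe2 Rmult_comm) as H.
    simpl in H. rewrite shift0 in H. exact H.
Qed.

Lemma dir_deriv_ev e v : dir_deriv (ev e) v = ev (dv v e).
Proof.
  apply functional_extensionality; intro q. unfold dir_deriv.
  apply is_derive_unique, ev_derive.
Qed.

Lemma ev_cont e (q : C2) : continuous (ev e) q.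
Proof.
  induction e; simpl.
  - apply continuous_const.
  - destruct q as [[a b][c d]].
    destruct i as [|[|[|i]]]; simpl.
    + apply (continuous_comp (fun q : C2 => fst q) (fun c : C => fst c)); apply continuous_fst.
    + apply (continuous_comp (fun q : C2 => fst q) (fun c : C => snd c)); [apply continuous_fst|apply continuous_snd].
    + apply (continuous_comp (fun q : C2 => snd q) (fun c : C => fst c)); [apply continuous_snd|apply continuous_fst].
    + apply (continuous_comp (fun q : C2 => snd q) (fun c : C => snd c)); apply continuous_snd.
  - apply (continuous_plus (ev e1) (ev e2)); auto.
  - apply (continuous_mult (ev e1) (ev e2)); auto.
Qed.

Lemma C2_on_ev U e : C2_on U (ev e).
Proof.
  intros q _. split; [apply ev_cont|]. intros v w.
  unfold dir_derivable. rewrite !dir_deriv_ev.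
  repeat split.
  - eexists; apply ev_derive.
  - apply ev_cont.
  - eexists; apply ev_derive.
  - apply ev_cont.
Qed.

Lemma hess_ev e p v w : hess (ev e) p v w = ev (dv w (dv v e)) p.
Proof. unfold hess. rewrite !dir_deriv_ev. reflexivity. Qed.

Lemma open_pos e : open (fun q => 0 < ev e q).
Proof.
  apply (open_comp (ev e) (fun y => 0 < y)).
  - intros x _. apply ev_cont.
  - apply open_gt.
Qed.


Definition psub e f := PA e (PM (PC (-1)) f).
Definition psq e := PM e e.
Definition S1 := PV 0. Definition S2 := PV 1. Definition P1v := PV 2. Definition P2v := PV 3.
Definition EA1 := psub (psub (psq S1) (psq S2)) (PM (PC 4) P1v).
Definition EA2 := psub (PM (PC 2) (PM S1 S2)) (PM (PC 4) P2v).
Definition EB := psub (PA (PC 2) (PM (PC 2) (PA (psq P1v) (psq P2v)))) (PA (psq S1) (psq S2)).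
Definition E (A : R) : pe :=
  psub (PM (PC ((2 - A) * (2 - A))) (PA (psq EA1) (psq EA2))) (PM (PC (A * A)) (psq EB)).

Definition pi (z1 z2 : C) : C2 := (Cplus z1 z2, Cmult z1 z2).
Definition nrm2 (c : C) : R := fst c * fst c + snd c * snd c.
Definition Xf (z1 z2 : C) := nrm2 (z1 - z2)%C.
Definition Yf (z1 z2 : C) := nrm2 (1 - Cconj z1 * z2)%C.
Definition uf A z1 z2 := Xf z1 z2 - A * Yf z1 z2.
Definition hf A z1 z2 := (1 - A) * Xf z1 z2 + A * Yf z1 z2.
Definition c1f (A : R) (z1 z2 : C) : C := (Cconj (z1 - z2) + A * ((1 - Cconj z1 * z2) * Cconj z2))%C.
Definition c2f (A : R) (z1 z2 : C) : C := (- Cconj (z1 - z2) + A * (Cconj z1 * (1 - z1 * Cconj z2)))%C.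
Definition duf A z1 z2 (W1 W2 : C) : C := (c1f A z1 z2 * W1 + c2f A z1 z2 * W2)%C.
Definition dhf A z1 z2 (W1 W2 : C) : C :=
  ((1 - A) * (Cconj (z1 - z2) * (W1 - W2)) +
   A * (- ((1 - Cconj z1 * z2) * Cconj z2) * W1 - (Cconj z1 * (1 - z1 * Cconj z2)) * W2))%C.
Definition Luf A (z1 z2 W1 W2 : C) : R :=
  nrm2 (W1 - W2)%C - A * nrm2 (z2 * W1 + z1 * W2)%C + 2 * A * fst (W1 * Cconj W2)%C.
Definition Lhf A (z1 z2 W1 W2 : C) : R :=
  (1 - A) * nrm2 (W1 - W2)%C + A * (nrm2 (z2 * W1 + z1 * W2)%C - 2 * fst (W1 * Cconj W2)%C).

Lemma G_pi A z1 z2 : ev (E A) (pi z1 z2) = 4 * uf A z1 z2 * hf A z1 z2.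
Proof.
  destruct z1 as [x1 y1]; destruct z2 as [x2 y2].
  unfold uf, hf, Xf, Yf, nrm2, pi; simpl.
  unfold Cconj, Cminus, Cplus, Cmult, Copp, RtoC; simpl. ring.
Qed.

Lemma tang_id A z1 z2 vs vp :
  let d := (z1 - z2)%C in
  let W1 := (z1 * vs - vp)%C in let W2 := (vp - z2 * vs)%C in
  let Q := (hf A z1 z2 * duf A z1 z2 W1 W2 + uf A z1 z2 * dhf A z1 z2 W1 W2)%C in
  fst d * ev (dv (vs, vp) (E A)) (pi z1 z2) + snd d * ev (dv (C2_J (vs, vp)) (E A)) (pi z1 z2)
   = 8 * fst Q /\
  - snd d * ev (dv (vs, vp) (E A)) (pi z1 z2) + fst d * ev (dv (C2_J (vs, vp)) (E A)) (pi z1 z2)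
   = - 8 * snd Q.
Proof.
  destruct z1 as [x1 y1]; destruct z2 as [x2 y2]; destruct vs as [a1 b1]; destruct vp as [a2 b2].
  unfold uf, hf, Xf, Yf, nrm2, pi, duf, dhf, c1f, c2f, C2_J; simpl.
  unfold Cconj, Cminus, Cplus, Cmult, Copp, RtoC, Ci; simpl. split; ring.
Qed.


Lemma levi_id A z1 z2 vs vp :
  let W1 := (z1 * vs - vp)%C in let W2 := (vp - z2 * vs)%C in
  Xf z1 z2 * levi_form (ev (E A)) (pi z1 z2) (vs, vp) =
  4 * (hf A z1 z2 * Luf A z1 z2 W1 W2 + uf A z1 z2 * Lhf A z1 z2 W1 W2
       + 2 * fst (duf A z1 z2 W1 W2 * Cconj (dhf A z1 z2 W1 W2))%C).
Proof.
  intros W1 W2; subst W1 W2.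
  unfold levi_form; rewrite !hess_ev.
  destruct z1 as [x1 y1]; destruct z2 as [x2 y2]; destruct vs as [a1 b1]; destruct vp as [a2 b2].
  unfold uf, hf, Xf, Yf, nrm2, pi, duf, dhf, c1f, c2f, C2_J, Luf, Lhf; simpl.
  unfold Cconj, Cminus, Cplus, Cmult, Copp, RtoC, Ci; simpl. unfold nrm2; simpl. field.
Qed.

Lemma Lu_t A z1 z2 : Yf z1 z2 <> 0 -> A = Xf z1 z2 / Yf z1 z2 ->
  Luf A z1 z2 (c2f A z1 z2) (- c1f A z1 z2)%C = 2 * A * A * (1 - A) * Yf z1 z2.
Proof.
  intros HY HA. 
  destruct z1 as [x1 y1]; destruct z2 as [x2 y2].
  unfold Yf, Xf, nrm2 in *. subst A.
  unfold c1f, c2f, Luf, nrm2; simpl.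
  unfold Cconj, Cminus, Cplus, Cmult, Copp, RtoC, Ci in *; simpl in *. field. intro H; apply HY; nra.
Qed.



Ltac cunf := unfold Cconj, Cminus, Cplus, Cmult, Copp, RtoC, Ci, nrm2 in *; simpl in *.

Lemma nrm2_mult a b : nrm2 (a * b)%C = nrm2 a * nrm2 b.
Proof. destruct a, b; cunf; ring. Qed.
Lemma nrm2_ge0 a : 0 <= nrm2 a.
Proof. destruct a; cunf; nra. Qed.
Lemma nrm2_zero a : nrm2 a = 0 -> a = RtoC 0.
Proof. destruct a as [x y]; cunf; intro H. assert (x = 0) by nra. assert (y = 0) by nra. subst; reflexivity. Qed.

Lemma par_id (c1 c2 W1 W2 : C) :
  let r := nrm2 c2 + nrm2 (- c1)%C in
  let mu := (W1 * Cconj c2 + W2 * Cconj (- c1))%C in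
  (r * W1 - mu * c2 = (c1 * W1 + c2 * W2) * Cconj c1)%C /\
  (r * W2 - mu * (- c1) = (c1 * W1 + c2 * W2) * Cconj c2)%C.
Proof.
  destruct c1, c2, W1, W2; cunf; split; apply injective_projections; simpl; ring.
Qed.

Lemma Lu_scale A z1 z2 (m W1 W2 : C) :
  Luf A z1 z2 (m * W1) (m * W2) = nrm2 m * Luf A z1 z2 W1 W2.
Proof. destruct z1, z2, m, W1, W2; unfold Luf; cunf; ring. Qed.

Lemma Lu_zero A z1 z2 : Luf A z1 z2 (RtoC 0) (RtoC 0) = 0.
Proof. destruct z1, z2; unfold Luf; cunf; ring. Qed.

Lemma Y_pos z1 z2 : nrm2 z1 < 1 -> nrm2 z2 < 1 -> 0 < Yf z1 z2.
Proof.
  destruct z1 as [x1 y1], z2 as [x2 y2]; unfold Yf; cunf; intros H1 H2.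
  assert (0 <= (x1-x2)^2 + (y1-y2)^2) by (apply Rplus_le_le_0_compat; apply pow2_ge_0).
  assert (x1 * x2 + y1 * y2 < 1) by nra.
  assert (0 <= (x1 * y2 - y1 * x2) ^ 2) by apply pow2_ge_0.
  assert (0 < (1 - (x1 * x2 + y1 * y2)) ^ 2) by (apply pow_lt; lra). nra.
Qed.

Lemma X_ge0 z1 z2 : 0 <= Xf z1 z2.
Proof. apply nrm2_ge0. Qed.

Lemma dpi_id (z1 z2 vs vp : C) :
  let W1 := (z1 * vs - vp)%C in let W2 := (vp - z2 * vs)%C in
  (W1 + W2 = (z1 - z2) * vs)%C /\ (z2 * W1 + z1 * W2 = (z1 - z2) * vp)%C.
Proof. destruct z1, z2, vs, vp; cunf; split; apply injective_projections; simpl; ring. Qed.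


Lemma aux_fst h u (D c : C) x : 0 < h -> u = 0 -> x = 0 -> x = 8 * fst (h * D + u * c)%C -> fst D = 0.
Proof. intros Hh Hu Hx E. subst. destruct D, c; cunf. clear -Hh E.
  assert (h * r = 0) by lra. destruct (Rmult_integral _ _ H); lra. Qed.
Lemma aux_snd h u (D c : C) x : 0 < h -> u = 0 -> x = 0 -> x = - 8 * snd (h * D + u * c)%C -> snd D = 0.
Proof. intros Hh Hu Hx E. subst. destruct D, c; cunf. clear -Hh E.
  assert (h * r0 = 0) by lra. destruct (Rmult_integral _ _ H); lra. Qed.
Lemma aux_L X lev h Lu u Lh (D c : C) : fst D = 0 -> snd D = 0 -> u = 0 ->
  X * lev = 4 * (h * Lu + u * Lh + 2 * fst (D * Cconj c)%C) -> X * lev = 4 * (h * Lu).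
Proof. intros H1 H2 Hu E. rewrite E. destruct D, c; simpl in *; subst; cunf. ring. Qed.
Lemma aux_P (a b k : C) : (a - b = RtoC 0 * k)%C -> a = b.
Proof. destruct a, b, k; cunf. intro H; injection H; intros; f_equal; lra. Qed.
Lemma aux_pos a b c : 0 < a -> 0 < c -> a * b = c -> 0 < b.
Proof. intros Ha Hc E. destruct (Rlt_or_le 0 b) as [|Hb]; [assumption|].
  assert (a * b <= 0) by (apply Rmult_le_0_l; lra). lra. Qed.
Lemma aux_zero a b : 0 < a -> a * b = 0 -> b = 0.
Proof. intros Ha E. destruct (Rmult_integral _ _ E); lra. Qed.
Lemma nrm2_RtoC r : 0 < r -> 0 < nrm2 (RtoC r).
Proof. intro; cunf. nra. Qed.
Lemma nrm2_scale_zero r (W t m : C) : 0 < r -> (r * W = m * t)%C -> m = RtoC 0 -> W = RtoC 0.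
Proof. intros Hr E Hm. apply nrm2_zero. subst m.
  assert (nrm2 (r * W)%C = 0) by (rewrite E; destruct t; cunf; ring).
  rewrite nrm2_mult in H. exact (aux_zero _ _ (nrm2_RtoC r Hr) H). Qed.
Lemma sum_zero a b : 0 <= a -> 0 <= b -> a + b = 0 -> a = 0 /\ b = 0.
Proof. intros; split; lra. Qed.

Lemma levi_pos A z1 z2 vs vp :
  0 < A -> A < 1 -> nrm2 z1 < 1 -> nrm2 z2 < 1 -> Xf z1 z2 = A * Yf z1 z2 ->
  (vs, vp) <> C2_zero ->
  dir_deriv (ev (E A)) (vs, vp) (pi z1 z2) = 0 ->
  dir_deriv (ev (E A)) (C2_J (vs, vp)) (pi z1 z2) = 0 ->
  levi_form (ev (E A)) (pi z1 z2) (vs, vp) > 0.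
Proof.
  intros HA0 HA1 H1 H2 HXY Hv T1 T2.
  rewrite dir_deriv_ev in T1, T2.
  pose proof (Y_pos _ _ H1 H2) as HY.
  assert (HX : 0 < Xf z1 z2) by (rewrite HXY; apply Rmult_lt_0_compat; assumption).
  assert (Hu : uf A z1 z2 = 0) by (unfold uf; lra).
  assert (Hh : 0 < hf A z1 z2).
  { unfold hf. assert (0 < A * Yf z1 z2) by (apply Rmult_lt_0_compat; assumption).
    assert (0 <= (1 - A) * Xf z1 z2) by (apply Rmult_le_pos; lra). lra. }
  set (W1 := (z1 * vs - vp)%C). set (W2 := (vp - z2 * vs)%C).
  set (D := duf A z1 z2 W1 W2).
  pose proof (tang_id A z1 z2 vs vp) as TT; cbv zeta in TT; destruct TT as [E1 E2].
  fold W1 W2 in E1, E2. fold D in E1, E2.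
  rewrite T1, T2 in E1, E2.
  assert (HD1 : fst D = 0) by (refine (aux_fst _ _ _ _ _ Hh Hu _ E1); ring).
  assert (HD2 : snd D = 0) by (refine (aux_snd _ _ _ _ _ Hh Hu _ E2); ring).
  pose proof (levi_id A z1 z2 vs vp) as L. cbv zeta in L. fold W1 W2 D in L.
  pose proof (aux_L _ _ _ _ _ _ _ _ HD1 HD2 Hu L) as L'. clear L.
  assert (HLt : Luf A z1 z2 (c2f A z1 z2) (- c1f A z1 z2)%C = 2 * A * A * (1 - A) * Yf z1 z2).
  { apply Lu_t; [lra|]. rewrite HXY. field. lra. }
  assert (HLtp : 0 < Luf A z1 z2 (c2f A z1 z2) (- c1f A z1 z2)%C).
  { rewrite HLt. assert (0 < A * A) by (apply Rmult_lt_0_compat; lra). assert (0 < 1 - A) by lra.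
    apply Rmult_lt_0_compat; [|exact HY]. rewrite Rmult_assoc. apply Rmult_lt_0_compat; [lra|].
    apply Rmult_lt_0_compat; lra. }
  pose proof (par_id (c1f A z1 z2) (c2f A z1 z2) W1 W2) as PP; cbv zeta in PP; destruct PP as [P1 P2].
  set (t1 := c2f A z1 z2) in *. set (t2 := (- c1f A z1 z2)%C) in *.
  set (r := nrm2 t1 + nrm2 t2) in *.
  set (mu := (W1 * Cconj t1 + W2 * Cconj t2)%C) in *.
  assert (HcW : (c1f A z1 z2 * W1 + t1 * W2)%C = RtoC 0).
  { unfold D, duf in HD1, HD2. fold t1 in HD1, HD2.
    destruct (c1f A z1 z2 * W1 + t1 * W2)%C; simpl in *; subst; reflexivity. }
  rewrite HcW in P1, P2.
  apply aux_P in P1. apply aux_P in P2.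
  assert (Hr : 0 < r).
  { pose proof (nrm2_ge0 t1); pose proof (nrm2_ge0 t2).
    destruct (Rle_lt_or_eq_dec 0 r) as [?|Hr0]; [unfold r; lra|assumption|].
    exfalso. destruct (sum_zero _ _ H H0 (eq_sym Hr0)) as [Z1 Z2].
    apply nrm2_zero in Z1, Z2. rewrite Z1, Z2, Lu_zero in HLtp. lra. }
  assert (Hmu : 0 < nrm2 mu).
  { destruct (nrm2_ge0 mu) as [?|Hm0]; [assumption|]. exfalso.
    symmetry in Hm0. apply nrm2_zero in Hm0.
    pose proof (nrm2_scale_zero _ _ _ _ Hr P1 Hm0) as HW1.
    pose proof (nrm2_scale_zero _ _ _ _ Hr P2 Hm0) as HW2.
    pose proof (dpi_id z1 z2 vs vp) as QQ; cbv zeta in QQ; destruct QQ as [Q1 Q2]. fold W1 W2 in Q1, Q2.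
    rewrite HW1, HW2 in Q1, Q2.
    assert (Hs : nrm2 vs = 0).
    { assert (nrm2 ((z1 - z2) * vs)%C = 0) by (rewrite <- Q1; cunf; ring).
      rewrite nrm2_mult in H. fold (Xf z1 z2) in H. exact (aux_zero _ _ HX H). }
    assert (Hp : nrm2 vp = 0).
    { assert (nrm2 ((z1 - z2) * vp)%C = 0) by (rewrite <- Q2; cunf; ring).
      rewrite nrm2_mult in H. fold (Xf z1 z2) in H. exact (aux_zero _ _ HX H). }
    apply nrm2_zero in Hs, Hp. apply Hv. rewrite Hs, Hp. reflexivity. }
  assert (HLW : 0 < Luf A z1 z2 W1 W2).
  { assert (K : nrm2 (RtoC r) * Luf A z1 z2 W1 W2 = nrm2 mu * Luf A z1 z2 t1 t2).
    { rewrite <- !Lu_scale. rewrite P1, P2. reflexivity. }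
    refine (aux_pos _ _ _ (nrm2_RtoC r Hr) _ K).
    apply Rmult_lt_0_compat; assumption. }
  apply Rlt_gt. refine (aux_pos _ _ _ HX _ L').
  apply Rmult_lt_0_compat; [lra|]. apply Rmult_lt_0_compat; assumption.
Qed.


Definition dpi (z1 z2 W1 W2 : C) : C2 := ((W1 + W2)%C, (z2 * W1 + z1 * W2)%C).

Lemma grad_id A z1 z2 W1 W2 :
  ev (dv (dpi z1 z2 W1 W2) (E A)) (pi z1 z2) =
  8 * fst (hf A z1 z2 * duf A z1 z2 W1 W2 + uf A z1 z2 * dhf A z1 z2 W1 W2)%C.
Proof.
  destruct z1 as [x1 y1]; destruct z2 as [x2 y2]; destruct W1 as [a1 b1]; destruct W2 as [a2 b2].
  unfold uf, hf, Xf, Yf, pi, dpi, duf, dhf, c1f, c2f; simpl.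
  unfold Cconj, Cminus, Cplus, Cmult, Copp, RtoC, Ci, nrm2; simpl. ring.
Qed.

Lemma ball_C2 (x y : C2) (e : R) :
  Rabs (fst (fst y) - fst (fst x)) < e -> Rabs (snd (fst y) - snd (fst x)) < e ->
  Rabs (fst (snd y) - fst (snd x)) < e -> Rabs (snd (snd y) - snd (snd x)) < e ->
  ball x e y.
Proof.
  intros H1 H2 H3 H4. split; split; assumption.
Qed.

Lemma in_disc_nrm2 z : in_disc z <-> nrm2 z < 1.
Proof.
  destruct z as [x y]. unfold in_disc, Cmod, nrm2; cbn [fst snd].
  replace (x ^ 2 + y ^ 2) with (x * x + y * y) by ring.
  assert (0 <= x * x + y * y) by nra.
  split; intro H0.
  - apply Rnot_le_lt; intro Hc; apply (Rlt_not_le _ _ H0); rewrite <- sqrt_1; apply sqrt_le_1_alt; lra.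
  - rewrite <- sqrt_1. apply sqrt_lt_1_alt. lra.
Qed.

Lemma cmod_cond a z1 z2 : 0 < a -> 0 < Yf z1 z2 ->
  (Cmod (Cdiv (Cminus z1 z2) (Cminus (RtoC 1) (Cmult (Cconj z1) z2))) = a <->
   Xf z1 z2 = a * a * Yf z1 z2).
Proof.
  intros Ha HY.
  assert (Hn : Cminus (RtoC 1) (Cmult (Cconj z1) z2) <> RtoC 0).
  { intro H. unfold Yf in HY. rewrite H in HY. cunf. lra. }
  rewrite Cmod_div by exact Hn.
  assert (EX : Cmod (Cminus z1 z2) = sqrt (Xf z1 z2)).
  { unfold Cmod, Xf, nrm2. f_equal. simpl. ring. }
  assert (EY : Cmod (Cminus (RtoC 1) (Cmult (Cconj z1) z2)) = sqrt (Yf z1 z2)).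
  { unfold Cmod, Yf, nrm2. f_equal. simpl. ring. }
  rewrite EX, EY.
  pose proof (X_ge0 z1 z2) as HX.
  assert (HsY : 0 < sqrt (Yf z1 z2)) by (apply sqrt_lt_R0; lra).
  split; intro H.
  - assert (sqrt (Xf z1 z2) = a * sqrt (Yf z1 z2)).
    { rewrite <- H. field. lra. }
    rewrite <- (sqrt_sqrt (Xf z1 z2)) by lra. rewrite H0.
    replace (a * sqrt (Yf z1 z2) * (a * sqrt (Yf z1 z2))) with (a * a * (sqrt (Yf z1 z2) * sqrt (Yf z1 z2))) by ring.
    rewrite sqrt_sqrt by lra. reflexivity.
  - rewrite H. rewrite sqrt_mult by nra. rewrite sqrt_square by lra. field. lra.
Qed.

Lemma csqrt (w : C) : exists d : C, (d * d = w)%C.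
Proof.
  destruct w as [x y].
  set (r := sqrt (x * x + y * y)).
  assert (Hr0 : 0 <= x * x + y * y) by nra.
  assert (Hrr : r * r = x * x + y * y) by (apply sqrt_sqrt; lra).
  assert (Hr : 0 <= r) by apply sqrt_pos.
  assert (Hx1 : x <= r) by nra. assert (Hx2 : - r <= x) by nra.
  set (d1 := sqrt ((r + x) / 2)). set (d2 := sqrt ((r - x) / 2)).
  assert (E1 : d1 * d1 = (r + x) / 2) by (apply sqrt_sqrt; lra).
  assert (E2 : d2 * d2 = (r - x) / 2) by (apply sqrt_sqrt; lra).
  assert (E3 : d1 * d2 = Rabs y / 2).
  { unfold d1, d2. rewrite <- sqrt_mult_alt by lra.
    replace ((r + x) / 2 * ((r - x) / 2)) with (Rsqr (Rabs y / 2)).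
    - apply sqrt_Rsqr. pose proof (Rabs_pos y). lra.
    - unfold Rsqr. replace (Rabs y / 2 * (Rabs y / 2)) with ((Rabs y * Rabs y) / 4) by field.
      rewrite <- Rabs_mult, Rabs_pos_eq by nra. nra. }
  destruct (Rle_or_lt 0 y) as [Hy|Hy].
  - exists (d1, d2). unfold Cmult; simpl. rewrite Rabs_pos_eq in E3 by lra. f_equal; lra.
  - exists (d1, - d2). unfold Cmult; simpl. rewrite Rabs_left in E3 by lra. f_equal; nra.
Qed.

Lemma root_near_aux (d d0 : C) e : 0 <= fst (d * Cconj d0)%C -> 0 < nrm2 d0 ->
  nrm2 (d * d - d0 * d0)%C < e * e * nrm2 d0 -> nrm2 (d - d0)%C < e * e.
Proof.
  intros Hp Hd0 H.
  assert (K1 : nrm2 (d * d - d0 * d0)%C = nrm2 (d - d0)%C * nrm2 (d + d0)%C).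
  { rewrite <- nrm2_mult. f_equal. destruct d, d0; cunf. apply injective_projections; simpl; ring. }
  assert (K2 : nrm2 (d + d0)%C = nrm2 d + nrm2 d0 + 2 * fst (d * Cconj d0)%C).
  { destruct d, d0; cunf. ring. }
  pose proof (nrm2_ge0 d). pose proof (nrm2_ge0 (d - d0)%C).
  assert (nrm2 (d - d0)%C * nrm2 d0 <= nrm2 (d - d0)%C * nrm2 (d + d0)%C)
    by (apply Rmult_le_compat_l; lra).
  assert (nrm2 (d - d0)%C * nrm2 d0 < e * e * nrm2 d0) by lra.
  apply (Rmult_lt_reg_r (nrm2 d0)); lra.
Qed.

Lemma root_near (w d0 : C) e : 0 < nrm2 d0 ->
  nrm2 (w - d0 * d0)%C < e * e * nrm2 d0 ->
  exists d : C, (d * d = w)%C /\ nrm2 (d - d0)%C < e * e.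
Proof.
  intros Hd0 H. destruct (csqrt w) as [d Hd].
  destruct (Rle_or_lt 0 (fst (d * Cconj d0)%C)) as [Hs|Hs].
  - exists d. split; [assumption|]. apply root_near_aux; try assumption. rewrite Hd; assumption.
  - exists (- d)%C. split.
    + rewrite <- Hd. destruct d; cunf. apply injective_projections; simpl; ring.
    + apply root_near_aux; try assumption.
      * destruct d, d0; cunf. lra.
      * replace (- d * - d)%C with w; [assumption|]. rewrite <- Hd. destruct d; cunf. apply injective_projections; simpl; ring.
Qed.


Definition eN1 := psub (PC 1) (PA (psq (PV 0)) (psq (PV 1))).
Definition eN2 := psub (PC 1) (PA (psq (PV 2)) (psq (PV 3))).
Lemma ev_eN1 (z : C2) : ev eN1 z = 1 - nrm2 (fst z).
Proof. destruct z as [[a b] [c d]]; simpl; unfold nrm2; simpl; ring. Qed.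
Lemma ev_eN2 (z : C2) : ev eN2 z = 1 - nrm2 (snd z).
Proof. destruct z as [[a b] [c d]]; simpl; unfold nrm2; simpl; ring. Qed.

Definition eS (e : R) (s0 : C) := psub (PC (e * e)) (PA (psq (psub S1 (PC (fst s0)))) (psq (psub S2 (PC (snd s0))))).
Lemma ev_eS e s0 (S P : C) : ev (eS e s0) (S, P) = e * e - nrm2 (S - s0)%C.
Proof. destruct S, P, s0; simpl; unfold nrm2; simpl; ring. Qed.

Definition eD (e : R) (d0 : C) :=
  psub (PC (e * e * nrm2 d0)) (PA (psq (psub EA1 (PC (fst (d0 * d0)%C)))) (psq (psub EA2 (PC (snd (d0 * d0)%C))))).
Lemma ev_eD e d0 (S P : C) : ev (eD e d0) (S, P) = e * e * nrm2 d0 - nrm2 (S * S - RtoC 4 * P - d0 * d0)%C.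
Proof. destruct S, P, d0; simpl; unfold nrm2; simpl; ring. Qed.

Lemma nrm2_small (w : C) e : 0 < e -> nrm2 w < e * e -> Rabs (fst w) < e /\ Rabs (snd w) < e.
Proof.
  destruct w as [x y]; unfold nrm2; simpl; intros He H.
  split; apply Rabs_def1; nra.
Qed.

Lemma half_sum a b e : Rabs a < e -> Rabs b < e -> Rabs (/ 2 * (a + b)) < e.
Proof.
  intros Ha Hb. apply Rabs_def2 in Ha. apply Rabs_def2 in Hb. apply Rabs_def1; lra.
Qed.

Lemma pi_eq (S P d : C) : (d * d = S * S - RtoC 4 * P)%C ->
  (S, P) = pi (RtoC (/ 2) * (S + d))%C (RtoC (/ 2) * (S - d))%C.
Proof.
  destruct S as [s1 s2], P as [p1 p2], d as [d1 d2]; unfold pi; cunf. intro H.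
  injection H; intros H1 H2.
  f_equal; apply injective_projections; simpl; nra.
Qed.


Lemma h_pos A z1 z2 : 0 < A -> A < 1 -> 0 < Yf z1 z2 -> 0 < hf A z1 z2.
Proof.
  intros. unfold hf. pose proof (X_ge0 z1 z2).
  assert (0 < A * Yf z1 z2) by (apply Rmult_lt_0_compat; assumption).
  assert (0 <= (1 - A) * Xf z1 z2) by (apply Rmult_le_pos; lra). lra.
Qed.

Lemma c_nonzero A z1 z2 : 0 < A -> A < 1 -> 0 < Yf z1 z2 -> Xf z1 z2 = A * Yf z1 z2 ->
  0 < nrm2 (c1f A z1 z2) + nrm2 (c2f A z1 z2).
Proof.
  intros HA0 HA1 HY HXY.
  assert (HLt : Luf A z1 z2 (c2f A z1 z2) (- c1f A z1 z2)%C = 2 * A * A * (1 - A) * Yf z1 z2).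
  { apply Lu_t; [lra|]. rewrite HXY. field. lra. }
  assert (HLtp : 0 < Luf A z1 z2 (c2f A z1 z2) (- c1f A z1 z2)%C).
  { rewrite HLt. assert (0 < A * A) by (apply Rmult_lt_0_compat; lra). assert (0 < 1 - A) by lra.
    apply Rmult_lt_0_compat; [|exact HY]. rewrite Rmult_assoc. apply Rmult_lt_0_compat; [lra|].
    apply Rmult_lt_0_compat; lra. }
  pose proof (nrm2_ge0 (c1f A z1 z2)); pose proof (nrm2_ge0 (c2f A z1 z2)).
  destruct (Rle_lt_or_eq_dec 0 (nrm2 (c1f A z1 z2) + nrm2 (c2f A z1 z2))) as [?|Hr0]; [lra|assumption|].
  exfalso. destruct (sum_zero _ _ H H0 (eq_sym Hr0)) as [Z1 Z2].
  apply nrm2_zero in Z1, Z2. rewrite Z1, Z2 in HLtp.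
  replace (- RtoC 0)%C with (RtoC 0) in HLtp by (cunf; apply injective_projections; simpl; ring).
  rewrite Lu_zero in HLtp. lra.
Qed.

Lemma grad_p A z1 z2 : 0 < A -> A < 1 -> 0 < Yf z1 z2 -> Xf z1 z2 = A * Yf z1 z2 ->
  0 < ev (dv (dpi z1 z2 (Cconj (c1f A z1 z2)) (Cconj (c2f A z1 z2))) (E A)) (pi z1 z2).
Proof.
  intros HA0 HA1 HY HXY. rewrite grad_id.
  assert (Hu : uf A z1 z2 = 0) by (unfold uf; lra).
  pose proof (h_pos _ _ _ HA0 HA1 HY) as Hh. pose proof (c_nonzero _ _ _ HA0 HA1 HY HXY) as Hc.
  rewrite Hu. unfold duf.
  revert Hh Hc. generalize (hf A z1 z2) (c1f A z1 z2) (c2f A z1 z2) (dhf A z1 z2 (Cconj (c1f A z1 z2)) (Cconj (c2f A z1 z2))).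
  intros h [a b] [c d] [x y] Hh Hc. cunf.
  assert (0 < h * (a * a + b * b + (c * c + d * d))) by (apply Rmult_lt_0_compat; assumption).
  nra.
Qed.

Theorem theorem2p11 (a : R) (ha0 : 0 < a) (ha1 : a < 1) :
  strongly_pseudoconvex_hypersurface symbidisc (L_orbit a).
Proof.
  split.
  { intros p [z1 [z2 [H1 [H2 [_ H]]]]]. exists z1, z2. auto. }
  intros p [z01 [z02 [Hd1 [Hd2 [Hm Hp]]]]].
  set (A := a * a).
  assert (HA0 : 0 < A) by (unfold A; nra). assert (HA1 : A < 1) by (unfold A; nra).
  apply in_disc_nrm2 in Hd1, Hd2.
  pose proof (Y_pos _ _ Hd1 Hd2) as HY0.
  apply (cmod_cond _ _ _ ha0 HY0) in Hm. fold A in Hm.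
  assert (Hpp : p = pi z01 z02) by exact Hp. clear Hp. subst p.
  set (d0 := (z01 - z02)%C).
  assert (Hd0 : 0 < nrm2 d0).
  { change (nrm2 d0) with (Xf z01 z02). rewrite Hm. apply Rmult_lt_0_compat; assumption. }
  set (v0 := dpi z01 z02 (Cconj (c1f A z01 z02)) (Cconj (c2f A z01 z02))).
  pose proof (grad_p _ _ _ HA0 HA1 HY0 Hm) as Hg. fold v0 in Hg.
  assert (HO : open (fun z : C2 => 0 < ev eN1 z /\ 0 < ev eN2 z)) by (apply open_and; apply open_pos).
  destruct (HO (z01, z02)) as [eps Heps].
  { rewrite ev_eN1, ev_eN2; simpl; lra. }
  set (e := pos eps). assert (He : 0 < e) by apply cond_pos.
  set (s0 := (z01 + z02)%C).
  set (U := fun q => 0 < ev (eS e s0) q /\ 0 < ev (eD e d0) q /\ 0 < ev (psq (dv v0 (E A))) q).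
  assert (Urep : forall q, U q -> exists z1 z2, nrm2 z1 < 1 /\ nrm2 z2 < 1 /\ q = pi z1 z2).
  { intros [S P] [HS [HD _]]. rewrite ev_eS in HS. rewrite ev_eD in HD.
    destruct (root_near (S * S - RtoC 4 * P)%C d0 e Hd0) as [d [Hdd Hdn]]; [lra|].
    exists (RtoC (/ 2) * (S + d))%C, (RtoC (/ 2) * (S - d))%C.
    assert (Hb : ball (z01, z02) eps ((RtoC (/ 2) * (S + d))%C, (RtoC (/ 2) * (S - d))%C)).
    { destruct (nrm2_small (S - s0)%C e He ltac:(lra)) as [Ha1 Ha2].
      destruct (nrm2_small (d - d0)%C e He Hdn) as [Hb1 Hb2].
      unfold s0, d0 in *. destruct S as [S1 S2], d as [D1 D2], z01 as [x1 y1], z02 as [x2 y2].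
      cunf. apply ball_C2; simpl.
      - replace ((/ 2 * (S1 + D1) - 0 * (S2 + D2)) - x1) with (/ 2 * ((S1 + - (x1 + x2)) + (D1 + - (x1 + - x2)))) by field.
        apply half_sum; assumption.
      - replace ((/ 2 * (S2 + D2) + 0 * (S1 + D1)) - y1) with (/ 2 * ((S2 + - (y1 + y2)) + (D2 + - (y1 + - y2)))) by field.
        apply half_sum; assumption.
      - replace ((/ 2 * (S1 + - D1) - 0 * (S2 + - D2)) - x2) with (/ 2 * ((S1 + - (x1 + x2)) + - (D1 + - (x1 + - x2)))) by field.
        apply half_sum; [assumption|]. rewrite Rabs_Ropp; assumption.
      - replace ((/ 2 * (S2 + - D2) + 0 * (S1 + - D1)) - y2) with (/ 2 * ((S2 + - (y1 + y2)) + - (D2 + - (y1 + - y2)))) by field.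
        apply half_sum; [assumption|]. rewrite Rabs_Ropp; assumption. }
    destruct (Heps _ Hb) as [N1 N2]. rewrite ev_eN1 in N1. rewrite ev_eN2 in N2. simpl in N1, N2.
    split; [lra|]. split; [lra|]. apply pi_eq. exact Hdd. }
  exists U, (ev (E A)). split; [split; [|split; [|split; [|split; [|split]]]]|].
  - apply open_and; [apply open_pos|apply open_and; apply open_pos].
  - unfold U, pi. rewrite ev_eS, ev_eD. split; [|split].
    + replace (nrm2 (Cplus z01 z02 - s0)%C) with 0 by (unfold s0, nrm2; cunf; ring). nra.
    + replace (nrm2 (Cplus z01 z02 * Cplus z01 z02 - RtoC 4 * Cmult z01 z02 - d0 * d0)%C) with 0
        by (unfold d0; destruct z01, z02; unfold nrm2; cunf; ring).
      assert (0 < e * e) by nra. assert (0 < e * e * nrm2 d0) by (apply Rmult_lt_0_compat; assumption). lra.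
    + simpl. fold (pi z01 z02). apply Rmult_lt_0_compat; exact Hg.
  - intros q Hq. destruct (Urep q Hq) as [z1 [z2 [N1 [N2 ->]]]].
    exists z1, z2. repeat split; try apply in_disc_nrm2; assumption.
  - apply C2_on_ev.
  - intros q Hq. destruct (Urep q Hq) as [z1 [z2 [N1 [N2 ->]]]].
    pose proof (Y_pos _ _ N1 N2) as HY. split.
    + intros [w1 [w2 [D1 [D2 [Hm' Hq']]]]].
      apply in_disc_nrm2 in D1, D2.
      assert (Hq2 : pi z1 z2 = pi w1 w2) by exact Hq'. rewrite Hq2.
      rewrite G_pi. pose proof (Y_pos _ _ D1 D2) as HY'.
      apply (cmod_cond _ _ _ ha0 HY') in Hm'. fold A in Hm'.
      unfold uf. rewrite Hm'. ring.
    + intro H0. rewrite G_pi in H0.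
      pose proof (h_pos _ _ _ HA0 HA1 HY) as Hh.
      assert (Hu : uf A z1 z2 = 0).
      { destruct (Rmult_integral _ _ H0) as [H3|H3]; [|lra].
        destruct (Rmult_integral _ _ H3); [lra|assumption]. }
      exists z1, z2. split; [apply in_disc_nrm2; assumption|]. split; [apply in_disc_nrm2; assumption|].
      split; [|reflexivity]. apply (cmod_cond _ _ _ ha0 HY). fold A. unfold uf in Hu. lra.
  - intros q [_ [_ Hq]]. exists v0. rewrite dir_deriv_ev. change (0 < ev (dv v0 (E A)) q * ev (dv v0 (E A)) q) in Hq. intro Hz. rewrite Hz in Hq. lra.
  - intros [vs vp] Hv [T1 T2]. apply levi_pos; assumption.
Qed.
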